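(* Let $q\in\mathbb{C}^\times$ be not a root of unity, $k\in\mathbb{Z}_{>0}$ and $Q,\beta\in\mathbb{C}^\times$. The polynomials $p^{\langle Q\rangle}_t(q;\beta)(x_1,\dots,x_k)$, $1\le t\le k$, are algebraically independent over $\mathbb{C}$.
   Context: For $t,k>0$, $p_t(q)(x_1,\dots,x_k)=\sum_{\lambda\vdash t,\ \ell(\lambda)\le k}q^{-\ell(\lambda)}(q-q^{-1})^{\ell(\lambda)-1}m_\lambda(x_1,\dots,x_k)$ ($\lambda$ partitions of $t$ with at most $k$ nonzero parts, $m_\lambda$ monomial symmetric polynomial). With $\tilde\beta=(q-q^{-1})^{-1}(1-\beta^{-2})$, $p^{\langle Q\rangle}_t(q;\beta)(x_1,\dots,x_k)=p_t(q)(x_1,\dots,x_k)+\tilde\beta Q^{-t}+(q-q^{-1})\sum_{z=1}^{t-1}\tilde\beta Q^{-t+z}p_z(q)(x_1,\dots,x_k)$. *)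

(* Defs.v *)
From HB Require Import structures.
From mathcomp Require Import all_boot all_order all_algebra.
From mathcomp Require Import Rstruct.
From mathcomp Require Import complex.
From mathcomp Require Import mpoly.
Set Implicit Arguments. Unset Strict Implicit. Unset Printing Implicit Defensive.
Import Order.TTheory GRing.Theory Num.Theory.
Local Open Scope ring_scope.

Definition C : Type := complex Rdefinitions.R.

Definition lam_of (k : nat) (a : 'X_{1..k}) : seq nat :=
  sort geq (filter (fun n => n != 0%N) [seq a i | i <- enum 'I_k]).

Definition is_partition (k t : nat) (lam : seq nat) : bool :=
  [&& sorted geq lam, all (fun n => 0 < n)%N lam, sumn lam == t
    & size lam <= k]%N.

Definition partitions (k t : nat) : seq (seq nat) :=
  [seq lam <- undup [seq lam_of (val a) | a : 'X_{1..k < t.+1}]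
     | is_partition k t lam].

Definition msym (k : nat) (lam : seq nat) : {mpoly C[k]} :=
  \sum_(a : 'X_{1..k < (sumn lam).+1} | lam_of (val a) == lam) 'X_[val a].

Definition pt (q : C) (k t : nat) : {mpoly C[k]} :=
  \sum_(lam <- partitions k t)
     ((q ^- size lam) * (q - q^-1) ^+ (size lam).-1) *: msym k lam.

Definition betat (q beta : C) : C := (q - q^-1)^-1 * (1 - beta ^- 2).

Definition pQ (q beta Q : C) (k t : nat) : {mpoly C[k]} :=
  pt q k t + (betat q beta * Q ^- t)%:MP
  + (q - q^-1) *: \sum_(1 <= z < t) (betat q beta * Q ^- (t - z)) *: pt q k z.

Definition alg_indep (n k : nat) (lq : n.-tuple {mpoly C[k]}) : Prop :=
  forall P : {mpoly C[n]}, comp_mpoly lq P = 0 -> P = 0.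

(* Main.v *)
Require Import Defs.
From HB Require Import structures.
From mathcomp Require Import all_boot all_order all_algebra.
From mathcomp Require Import Rstruct complex mpoly.
From mathcomp Require Import zify ring.
Import GRing.Theory.
Local Open Scope ring_scope.

Lemma comp_mpolyA (n m l : nat) (p : {mpoly C[n]}) (lq : n.-tuple {mpoly C[m]})
  (lr : m.-tuple {mpoly C[l]}) :
  (p \mPo lq) \mPo lr = p \mPo [tuple (tnth lq i) \mPo lr | i < n].
Proof.
rewrite (comp_mpolyEX p lq) (comp_mpolyEX p) raddf_sum /=; apply: eq_bigr => mm _.
rewrite comp_mpolyZ !comp_mpolyX rmorph_prod; congr (_ *: _).
by apply: eq_bigr => i _; rewrite rmorphXn /= tnth_map tnth_ord_tuple.
Qed.

Definition cutt (n l : nat) (g : n.-tuple {mpoly C[l]}) (i : nat) : n.-tuple {mpoly C[l]} :=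
  [tuple if (j < i)%N then tnth g j else 0 | j < n].
Arguments cutt {n l}.

Lemma tripleA (n : nat) (f g : n.-tuple {mpoly C[n]}) (bt : 'I_n -> C) (H : 'I_n -> {mpoly C[n]}) :
  (forall P : {mpoly C[n]}, P \mPo g = 0 -> P = 0) ->
  (forall i, bt i != 0) ->
  (forall i, tnth f i - bt i *: tnth g i = H i \mPo cutt g i) ->
  forall P : {mpoly C[n]}, P \mPo f = 0 -> P = 0.
Proof.
move=> indg nzb eqf P Pf.
pose X : n.-tuple {mpoly C[n]} := [tuple 'X_i | i < n].
pose G : n.-tuple {mpoly C[n]} := [tuple bt i *: 'X_i + (H i \mPo cutt X i) | i < n].
have cutX (i : nat) (T : n.-tuple {mpoly C[n]}) :
    [tuple tnth (cutt X i) j \mPo T | j < n] = cutt T i.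
  apply: eq_from_tnth => j; rewrite !tnth_map !tnth_ord_tuple.
  idtac.
  by case: ifP => _; [rewrite ?tnth_map ?tnth_ord_tuple comp_mpolyXU -tnth_nth | rewrite comp_mpoly0].
have GX (T : n.-tuple {mpoly C[n]}) i : tnth G i \mPo T = bt i *: tnth T i + (H i \mPo cutt T i).
  rewrite tnth_map tnth_ord_tuple raddfD /= comp_mpolyZ comp_mpolyXU -tnth_nth.
  by rewrite comp_mpolyA cutX.
have fG : f = [tuple tnth G i \mPo g | i < n].
  apply: eq_from_tnth => i; rewrite tnth_map tnth_ord_tuple GX -eqf.
  by rewrite addrC subrK.
have PG : P \mPo G = 0 by apply: indg; rewrite comp_mpolyA -fG.
have [K HK] : exists K : n.-tuple {mpoly C[n]}, forall i, tnth G i \mPo K = 'X_i.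
  suff: forall t, (t <= n)%N -> exists K : n.-tuple {mpoly C[n]},
      forall i : 'I_n, (i < t)%N -> tnth G i \mPo K = 'X_i.
    by move=> /(_ n (leqnn n)) [K HK]; exists K => i; apply: HK.
  elim=> [|t IH] ltn.
    by exists X => i.
  have [K HK] := IH (ltnW ltn).
  pose t' : 'I_n := Ordinal ltn.
  pose K' : n.-tuple {mpoly C[n]} :=
    [tuple if j == t' then (bt t')^-1 *: ('X_t' - (H t' \mPo cutt K t')) else tnth K j | j < n].
  have cutK (i : 'I_n) : (i <= t)%N -> cutt K' i = cutt K i.
    move=> lit; apply: eq_from_tnth => j; rewrite !tnth_map !tnth_ord_tuple.
    case: ifP => // lji; case: eqP => // ejt.
    by move: lji; rewrite ejt /= => /(leq_trans)/(_ lit); rewrite ltnn.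
  exists K' => i; rewrite ltnS leq_eqVlt => /orP [/eqP eit| lit].
    have -> : i = t' by apply: val_inj.
    rewrite GX cutK //= tnth_map tnth_ord_tuple eqxx scalerA mulfV // scale1r.
  by rewrite subrK.
  rewrite GX cutK ?(ltnW lit) // tnth_map tnth_ord_tuple.
  case: eqP => [eit|_]; first by move: lit; rewrite eit ltnn.
  by rewrite -GX HK.
have GK : [tuple tnth G i \mPo K | i < n] = X.
  by apply: eq_from_tnth => i; rewrite tnth_map tnth_ord_tuple HK tnth_map tnth_ord_tuple.
have -> : P = P \mPo X by rewrite /X comp_mpoly_id.
by rewrite -GK -comp_mpolyA PG comp_mpoly0.
Qed.

Definition ell (k : nat) (m : 'X_{1..k}) : nat := #|[pred i : 'I_k | m i != 0%N]|.
Arguments ell {k}.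

Definition Qt (k : nat) (s : C) (t : nat) : {mpoly C[k]} :=
  \sum_(m : 'X_{1..k < t.+1} | mdeg m == t) s ^+ ell m *: 'X_[m].

Lemma sum_pick (k b : nat) (P : pred 'X_{1..k}) (F : 'X_{1..k} -> C) (be : 'X_{1..k}) :
  \sum_(m : 'X_{1..k < b} | P (val m)) F (val m) * ((val m) == be)%:R =
  if (mdeg be < b)%N && P be then F be else 0.
Proof.
case: ifP => [/andP [hb hP] | h].
  rewrite (bigD1 (BMultinom hb)) //= eqxx mulr1 big1 ?addr0 // => m /andP [_ ne].
  case: eqP => [e|]; last by rewrite mulr0.
  exfalso; move/eqP: ne; apply. apply: val_inj. exact e.
apply: big1 => m Pm; case: eqP => [e|]; last by rewrite mulr0.
by move: h; rewrite -e bmdeg Pm.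
Qed.

Arguments sum_pick {k b}.

Lemma coef_Qt (k : nat) (s : C) (t : nat) (be : 'X_{1..k}) :
  (Qt k s t)@_be = (mdeg be == t)%:R * s ^+ ell be.
Proof.
rewrite /Qt raddf_sum /=.
under eq_bigr do rewrite mcoeffZ mcoeffX.
rewrite (sum_pick (fun m => mdeg m == t) (fun m => s ^+ ell m)).
case: (boolP (mdeg be == t)) => /= [/eqP e|ne]; first by rewrite e ltnSn mul1r.
by rewrite andbF mul0r.
Qed.

Lemma coef_XM (k : nat) (m be : 'X_{1..k}) (p : {mpoly C[k]}) :
  ('X_[m] * p)@_be = if (m <= be)%MM then p@_(be - m)%MM else 0.
Proof.
case: ifP => H.
  by rewrite mulrC -{1}(submK H) addmC mcoeffMX.
rewrite mulrC {1}(mpolyE p) mulr_suml raddf_sum big1 // => m' _.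
rewrite -scalerAl -mpolyXD /= mcoeffZ mcoeffX.
case: eqP => [e|]; last by rewrite mulr0.
by move: H; rewrite -e lem_addl.
Qed.

Lemma sum_sets (k : nat) (F : 'I_k -> bool -> C) :
  \sum_(h : {set 'I_k}) \prod_i F i (i \in h) = \prod_i (F i true + F i false).
Proof.
symmetry.
rewrite (eq_bigr (fun i => \sum_(b : bool) F i b)); last by move=> i _; rewrite big_bool.
rewrite bigA_distr_bigA /=.
rewrite (reindex (fun h : {set 'I_k} => [ffun i => i \in h])) /=.
  by apply: eq_bigr => h _; apply: eq_bigr => i _; rewrite ffunE.
apply: onW_bij; exists (fun f : {ffun 'I_k -> bool} => [set i | f i]).
  by move=> h; apply/setP => i; rewrite inE ffunE.
by move=> f; apply/ffunP => i; rewrite ffunE inE.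
Qed.

Arguments sum_sets {k}.

Definition psi (s : C) (n : nat) (b : bool) : C :=
  if b then (if n == 0%N then 0 else - (if n == 1%N then 1 else s))
  else (if n == 0%N then 1 else s).

Lemma summand_prod (k : nat) (s : C) (be : 'X_{1..k}) (h : {set 'I_k}) :
  (if (mesym1 h <= be)%MM then (-1) ^+ #|h| * s ^+ ell (be - mesym1 h)%MM else 0)
  = \prod_i psi s (be i) (i \in h).
Proof.
case: ifP => H.
  have E i : psi s (be i) (i \in h) =
      (if i \in h then -1 else 1) * (if (be - mesym1 h)%MM i != 0%N then s else 1).
    move/mnm_lepP: H => /(_ i); rewrite mnmBE /mesym1 mnmE /psi.
    case: (i \in h) => /=; case: (be i) => [|[|n]] //= _; by rewrite ?mulN1r ?mul1r ?subn1.
  rewrite (eq_bigr _ (fun i _ => E i)) big_split /= -!big_mkcond /= !prodr_const.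
  by [].
move/negbT: H => H.
have [i Hi] : exists i, ~~ (mesym1 h i <= be i)%N.
  apply/existsP; move: H; apply: contraR; move/existsPn => H'.
  by apply/mnm_lepP => i; have := H' i; rewrite negbK.
rewrite (bigD1 i) //= /psi; move: Hi; rewrite /mesym1 mnmE.
by case: (i \in h); case: (be i) => //=; rewrite mul0r.
Qed.

Lemma sum_sets_coef (k : nat) (s : C) (be : 'X_{1..k}) :
  \sum_(h : {set 'I_k})
     (if (mesym1 h <= be)%MM then (-1) ^+ #|h| * s ^+ ell (be - mesym1 h)%MM else 0)
  = ([forall i, be i <= 1])%N%:R * (s - 1) ^+ mdeg be.
Proof.
under eq_bigr do rewrite summand_prod.
rewrite (sum_sets (fun i b => psi s (be i) b)).
case: (boolP [forall i, be i <= 1]%N) => [/forallP H | /forallPn [i Hi]].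
  rewrite mul1r mdegE -prodrXr; apply: eq_bigr => i _.
  have := H i; rewrite /psi; case: (be i) => [|[|n]] //= _; [by rewrite add0r expr0 | by rewrite expr1 addrC].
rewrite mul0r (bigD1 i) //= /psi; move: Hi.
by case: (be i) => [|[|n]] //= _; rewrite addNr mul0r.
Qed.

Lemma sum_ord_eq (n x : nat) (F : nat -> C) :
  \sum_(j < n | x == j) F j = if (x < n)%N then F x else 0.
Proof.
case: ltnP => H.
  by rewrite (big_pred1 (Ordinal H)) // => j; rewrite eq_sym.
rewrite big_pred0 // => j; apply/negbTE; apply/eqP => e.
by move: (ltn_ord j); rewrite -e ltnNge H.
Qed.

Lemma nat_f1 (d c t : nat) : (c < t.+1)%N -> (d == (t - c)%N) = (d + c == t)%N.
Proof. by move=> H; apply/eqP/eqP; lia. Qed.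

Lemma nat_f2 (d c t : nat) : (t.+1 <= c)%N -> (d + c == t)%N = false.
Proof. by move=> H; apply/eqP; lia. Qed.

Lemma L2 (k : nat) (s : C) (t : nat) :
  \sum_(j < t.+1) (-1) ^+ j *: (mesym k C j * Qt k s (t - j)%N) = (s - 1) ^+ t *: mesym k C t.
Proof.
apply/mpolyP => be.
rewrite mcoeffZ mcoeff_mesym raddf_sum /=.
under eq_bigr => j _.
  rewrite mcoeffZ mesymE mulr_suml raddf_sum /= mulr_sumr.
  under eq_bigr do rewrite coef_XM coef_Qt.
  over.
rewrite /= (exchange_big_dep xpredT) //=.
under eq_bigr => h _.
  rewrite (sum_ord_eq t.+1 #|h| (fun j => (-1) ^+ j *
     (if (mesym1 h <= be)%MM then (mdeg (be - mesym1 h)%MM == (t - j)%N)%:R * s ^+ ell (be - mesym1 h)%MM else 0))).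
  have -> : (if (#|h| < t.+1)%N then (-1) ^+ #|h| *
     (if (mesym1 h <= be)%MM then (mdeg (be - mesym1 h)%MM == (t - #|h|)%N)%:R * s ^+ ell (be - mesym1 h)%MM else 0) else 0)
     = (if (mesym1 h <= be)%MM then (-1) ^+ #|h| * s ^+ ell (be - mesym1 h)%MM else 0) * (mdeg be == t)%:R.
    case: (boolP (mesym1 h <= be)%MM) => Hle /=; last by case: ifP => _; rewrite ?mulr0 ?mul0r.
    have Hd : mdeg be = (mdeg (be - mesym1 h)%MM + #|h|)%N by rewrite -mdeg_mesym1 -mdegD submK.
    rewrite Hd; case: ltnP => Hc.
      rewrite nat_f1 //; set b := (_ == _)%:R; by rewrite [b * _]mulrC mulrA.
    by rewrite nat_f2 // mulr0.
  over.
rewrite -mulr_suml sum_sets_coef /mechar.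
case: eqP => [->|_]; last by rewrite andFb !mulr0.
by rewrite andTb mulr1 mulrC.
Qed.

Lemma sumn_filter0 (s : seq nat) : sumn (filter (fun n => n != 0%N) s) = sumn s.
Proof. by elim: s => //= x s IH; case: eqP => [->|_] //=; rewrite IH. Qed.

Lemma lam_of_sum (k : nat) (be : 'X_{1..k}) : sumn (lam_of be) = mdeg be.
Proof.
rewrite /lam_of (perm_sumn (permEl (perm_sort _ _))) sumn_filter0 mdegE sumnE big_map.
by rewrite big_enum.
Qed.

Lemma lam_of_size (k : nat) (be : 'X_{1..k}) : size (lam_of be) = ell be.
Proof.
rewrite /lam_of size_sort size_filter count_map /ell cardE /enum_mem size_filter.
rewrite count_filter; apply: eq_count => x /=.
by rewrite !inE andbT.
Qed.

Lemma lam_of_part (k t : nat) (be : 'X_{1..k}) : is_partition k t (lam_of be) = (mdeg be == t).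
Proof.
rewrite /is_partition lam_of_sum.
have -> : sorted geq (lam_of be) by apply: sort_sorted => x y; exact: leq_total.
have -> : all (fun n => 0 < n)%N (lam_of be).
  rewrite /lam_of (perm_all _ (permEl (perm_sort _ _))).
  by apply/allP => x; rewrite mem_filter lt0n => /andP [].
have -> : (size (lam_of be) <= k)%N.
  rewrite /lam_of size_sort size_filter; apply: leq_trans (count_size _ _) _.
  by rewrite size_map size_enum_ord.
by rewrite andbT.
Qed.

Lemma coef_msym (k : nat) (lam : seq nat) (be : 'X_{1..k}) :
  (Defs.msym k lam)@_be = if (mdeg be < (sumn lam).+1)%N && (lam_of be == lam) then 1 else 0.
Proof.
rewrite /Defs.msym raddf_sum /=.
under eq_bigr do rewrite mcoeffX -[(_ == _)%:R]mul1r.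
exact: (sum_pick (fun m => lam_of m == lam) (fun _ => 1)).
Qed.

Lemma coef_pt (q : C) (k t : nat) (be : 'X_{1..k}) :
  (pt q k t)@_be = (mdeg be == t)%:R * (q ^- ell be * (q - q^-1) ^+ (ell be).-1).
Proof.
rewrite /pt raddf_sum /=.
under eq_big_seq => lam Hl.
  rewrite mcoeffZ coef_msym.
  have -> : sumn lam = t.
    by move: Hl; rewrite mem_filter /is_partition => /andP [/and4P [_ _ /eqP -> _] _].
  over.
have Hu : uniq (partitions k t) by apply: filter_uniq; apply: undup_uniq.
case: (boolP (mdeg be == t)) => Ht.
  have Hb : (mdeg be < t.+1)%N by rewrite (eqP Ht).
  have Hin : lam_of be \in partitions k t.
    rewrite mem_filter lam_of_part Ht /= mem_undup; apply/mapP.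
    by exists (BMultinom Hb) => //; rewrite mem_enum.
  rewrite (bigD1_seq (lam_of be)) //= Hb eqxx mulr1 big1 ?addr0 ?mul1r -?lam_of_size //.
  by move=> lam /negbTE; rewrite eq_sym => ->; rewrite andbF mulr0.
rewrite mul0r big1_seq // => lam /andP [_ Hl].
case: eqP => [e|]; last by rewrite andbF mulr0.
by move: Hl; rewrite -e mem_filter lam_of_part (negbTE Ht).
Qed.

Arguments lam_of_sum {k}.
Arguments lam_of_size {k}.

Lemma Qt0 (k : nat) (s : C) : Qt k s 0 = 1.
Proof.
apply/mpolyP => be; rewrite coef_Qt mcoeff1 mdeg_eq0.
case: eqP => [->|_]; last by rewrite mul0r.
rewrite mul1r /ell (_ : #|_| = 0%N) ?expr0 //.
apply: eq_card0 => i. by rewrite !inE mnm0E.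
Qed.

Lemma L2' (k : nat) (s : C) (z : nat) :
  Qt k s z = (s - 1) ^+ z *: mesym k C z
    - \sum_(j < z) (-1) ^+ j.+1 *: (mesym k C j.+1 * Qt k s (z - j.+1)%N).
Proof.
by rewrite -(L2 k s z) big_ord_recl /= expr0 scale1r mesym0E mul1r subn0 addrK.
Qed.

Definition gE (k : nat) : k.-tuple {mpoly C[k]} := [tuple mesym k C i.+1 | i < k].

Definition inA (k i : nat) (h : {mpoly C[k]}) : Prop :=
  exists H : {mpoly C[k]}, h = H \mPo cutt (gE k) i.

Lemma inA_add k i x y : inA k i x -> inA k i y -> inA k i (x + y).
Proof. by move=> [H1 ->] [H2 ->]; exists (H1 + H2); rewrite raddfD. Qed.

Lemma inA_mul k i x y : inA k i x -> inA k i y -> inA k i (x * y).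
Proof. by move=> [H1 ->] [H2 ->]; exists (H1 * H2); rewrite rmorphM. Qed.

Lemma inA_scale k i c x : inA k i x -> inA k i (c *: x).
Proof. by move=> [H1 ->]; exists (c *: H1); rewrite comp_mpolyZ. Qed.

Lemma inA_C k i c : inA k i (c%:MP).
Proof. by exists c%:MP; rewrite comp_mpolyC. Qed.

Lemma inA_opp k i x : inA k i x -> inA k i (- x).
Proof. by move=> [H1 ->]; exists (- H1); rewrite raddfN. Qed.

Lemma inA_sub k i x y : inA k i x -> inA k i y -> inA k i (x - y).
Proof. by move=> hx hy; apply: inA_add => //; apply: inA_opp. Qed.

Lemma inA_sum k i (I : eqType) (r : seq I) (P : pred I) (F : I -> {mpoly C[k]}) :
  (forall z, z \in r -> P z -> inA k i (F z)) -> inA k i (\sum_(z <- r | P z) F z).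
Proof.
elim: r => [|x r IH] H; first by rewrite big_nil; exists 0; rewrite comp_mpoly0.
rewrite big_cons; case: ifP => Px.
  apply: inA_add; first by apply: H; rewrite ?mem_head.
  by apply: IH => z zr; apply: H; rewrite in_cons zr orbT.
by apply: IH => z zr; apply: H; rewrite in_cons zr orbT.
Qed.

Lemma inA_e k i j : (j <= i)%N -> inA k i (mesym k C j).
Proof.
case: j => [|j] hj; first by rewrite mesym0E -mpolyC1; apply: inA_C.
case: (ltnP j k) => hk.
  exists 'X_(Ordinal hk); rewrite comp_mpolyXU -tnth_nth tnth_map tnth_ord_tuple /=.
  by rewrite hj tnth_map tnth_ord_tuple.
by rewrite mesym_geqnE //; exists 0; rewrite comp_mpoly0.
Qed.

Lemma inA_Q k s i z : (z <= i)%N -> inA k i (Qt k s z).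
Proof.
elim/ltn_ind: z => z IH hz.
rewrite L2'; apply: inA_sub; first by apply: inA_scale; apply: inA_e.
apply: inA_sum => j _ _; apply: inA_scale; apply: inA_mul.
  by apply: inA_e; apply: leq_trans hz.
apply: IH; last by apply: leq_trans (leq_subr _ _) hz.
by rewrite -subn_gt0 subKn ?(ltnW (ltn_ord j)) //; case: z {IH hz} j => [[]|].
Qed.

Lemma Qt_top k s i :
  Qt k s i.+1 - ((s - 1) ^+ i.+1 - (-1) ^+ i.+1) *: mesym k C i.+1 =
  - \sum_(j < i) (-1) ^+ j.+1 *: (mesym k C j.+1 * Qt k s (i.+1 - j.+1)%N).
Proof.
rewrite {1}L2' big_ord_recr /= subnn Qt0 mulr1 scalerBl.
set S := \sum_(j < i) _; set x := _ *: mesym k C i.+1; set y := _ *: mesym k C i.+1.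
by ring.
Qed.

Lemma inA_top k s i : inA k i (Qt k s i.+1 - ((s - 1) ^+ i.+1 - (-1) ^+ i.+1) *: mesym k C i.+1).
Proof.
rewrite Qt_top; apply: inA_opp; apply: inA_sum => j _ _; apply: inA_scale.
apply: inA_mul; first by apply: inA_e.
by apply: inA_Q; rewrite subSS leq_subr.
Qed.

Theorem mainTheorem19 (q Q beta : C) (k : nat) :
  q != 0 -> (forall n : nat, (0 < n)%N -> ~~ n.-unity_root q) ->
  (0 < k)%N -> Q != 0 -> beta != 0 ->
  alg_indep [tuple pQ q beta Q k i.+1 | i < k].
Proof.
move=> hq hroot hk hQ hbeta P HP.
set d := q - q^-1.
have hd : d != 0.
  apply/negP => /eqP e.
  have e' : q = q^-1 by apply/eqP; rewrite -subr_eq0 -/d e.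
  have := hroot 2%N isT; rewrite unity_rootE expr2 {2}e' mulfV //.
  by rewrite eqxx.
set s : C := 1 - q^-1 * q^-1.
have hs : d * q^-1 = s by rewrite /s /d; field.
have ptQ : forall t, (0 < t)%N -> pt q k t = d^-1 *: Qt k s t.
  move=> t tpos; apply/mpolyP => be; rewrite mcoeffZ coef_pt coef_Qt.
  case: (boolP (mdeg be == t)) => ht; last by rewrite !mul0r mulr0.
  have hl : (0 < ell be)%N.
    move: (lam_of_sum be); rewrite (eqP ht) -lam_of_size; case: (lam_of be) => //= h0.
    by move: tpos; rewrite -h0.
  case: (ell be) hl => // l _.
  rewrite -/d /= !mul1r -hs exprMn [d ^+ l.+1]exprS !mulrA mulVf // mul1r exprVn mulrC.
  by [].
pose bt (i : 'I_k) := d^-1 * ((s - 1) ^+ i.+1 - (-1) ^+ i.+1).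
have nzb : forall i, bt i != 0.
  move=> i; rewrite /bt mulf_neq0 ?invr_eq0 //.
  have hs1 : s - 1 = - 1 * (q ^+ 2)^-1 by rewrite /s; field.
  rewrite hs1 exprMn -exprVn -exprM -[X in _ - X]mulr1 -mulrBr mulf_neq0 //.
    by rewrite expf_neq0 // oppr_eq0 oner_eq0.
  rewrite subr_eq0 exprVn invr_eq1.
  have := hroot (2 * i.+1)%N; rewrite unity_rootE muln_gt0 /=; exact.
have key : forall i : 'I_k, exists H : {mpoly C[k]},
    tnth [tuple pQ q beta Q k i.+1 | i < k] i - bt i *: tnth (gE k) i = H \mPo cutt (gE k) i.
  move=> i; rewrite !tnth_map !tnth_ord_tuple /pQ ptQ //.
  set c := (betat q beta * Q ^- i.+1)%:MP.
  set D := d *: _.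
  have -> : d^-1 *: Qt k s i.+1 + c + D - bt i *: mesym k C i.+1 =
      d^-1 *: (Qt k s i.+1 - ((s - 1) ^+ i.+1 - (-1) ^+ i.+1) *: mesym k C i.+1) + (c + D).
    rewrite scalerBr scalerA /bt.
    set X := d^-1 *: Qt k s i.+1; set Y := _ *: mesym k C i.+1.
    by ring.
  apply: inA_add; first by apply: inA_scale; apply: inA_top.
  apply: inA_add; first by apply: inA_C.
  apply: inA_scale; apply: inA_sum => z; rewrite mem_index_iota => /andP [z1 z2] _.
  apply: inA_scale; rewrite ptQ //; apply: inA_scale; apply: inA_Q.
  by rewrite -ltnS.
have [H HH] := fin_all_exists key.
apply: (@tripleA k _ (gE k) bt H _ nzb HH P HP).
by move=> P0; rewrite /gE; apply: msym_fundamental_un0.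
Qed.
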